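(* Let $r\geq3$ and $n>k_1\geq\cdots\geq k_r\geq t+2$. Let $\mathcal{F}_1\subseteq\Pi(n,k_1),\ldots,\mathcal{F}_r\subseteq\Pi(n,k_r)$ be nonempty, non-trivial and $r$-cross $t$-intersecting, with $s_i=t$ for all $i\in[r]$. Then: (i) for each $j\in[r]$, every $t$-cover of $\mathcal{G}_j$ is a $(t+1)$-cover of all but at most one of the families $\mathcal{F}_i$, $i\in[r]\setminus\{j\}$; (ii) $\tau_t(\mathcal{F}_i)=t$ and $\tau_t(\mathcal{G}_i)\geq t+2$ for all $i\in[r]$.
   Context: $[n]=\{1,\ldots,n\}$. A partition is a set of pairwise disjoint nonempty sets (blocks); $|P|$ is its number of blocks, $F\cap G$ the set of common blocks. $\Pi(n,k)$ is the set of partitions of $[n]$ into $k$ blocks. Families $\mathcal{F}_i\subseteq\Pi(n,k_i)$ are $r$-cross $t$-intersecting if $|F_1\cap\cdots\cap F_r|\geq t$ for all $F_i\in\mathcal{F}_i$; non-trivial if fewer than $t$ blocks belong to every member of every $\mathcal{F}_i$. $\mathcal{G}_i:=\{\bigcap_{j\neq i}F_j:F_j\in\mathcal{F}_j,\ j\neq i\}$ and $s_i:=\min\{|G|:G\in\mathcal{G}_i\}$. An $s$-cover of a family of partitions is a partition (not necessarily of $[n]$) sharing at least $s$ blocks with every member; $\tau_t$ is the minimal number of blocks of a $t$-cover. *)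

(* Defs.v *)
From mathcomp Require Import all_boot.
Set Implicit Arguments. Unset Strict Implicit. Unset Printing Implicit Defensive.

(* Ground set [n] is represented by 'I_n; a block is a {set 'I_n};
   a partition is a {set {set 'I_n}}. *)

Definition is_partition (n : nat) (P : {set {set 'I_n}}) : Prop :=
  set0 \notin P /\ trivIset P.

Definition in_Pi (n k : nat) (P : {set {set 'I_n}}) : Prop :=
  is_partition P /\ cover P = [set: 'I_n] /\ #|P| = k.

Definition cross_intersecting (n r t : nat) (F : 'I_r -> {set {set {set 'I_n}}}) : Prop :=
  forall f : 'I_r -> {set {set 'I_n}}, (forall i, f i \in F i) ->
    t <= #|\bigcap_(i < r) f i|.

Definition nontrivial (n r t : nat) (F : 'I_r -> {set {set {set 'I_n}}}) : Prop :=
  #|\bigcap_(i < r) \bigcap_(P in F i) P| < t.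

Definition GG (n r : nat) (F : 'I_r -> {set {set {set 'I_n}}}) (i : 'I_r)
  : {set {set {set 'I_n}}} :=
  [set G | [exists f : {ffun 'I_r -> {set {set 'I_n}}},
     [forall j, (j != i) ==> (f j \in F j)] &&
     (G == \bigcap_(j < r | j != i) f j)]].

Definition is_minimum (Q : nat -> Prop) (m : nat) : Prop :=
  Q m /\ forall k, Q k -> m <= k.

Definition s_eq (n r : nat) (F : 'I_r -> {set {set {set 'I_n}}}) (i : 'I_r) (m : nat) : Prop :=
  is_minimum (fun x => exists2 G, G \in GG F i & #|G| = x) m.

Definition is_cover (n s : nat) (A : {set {set {set 'I_n}}}) (C : {set {set 'I_n}}) : Prop :=
  is_partition C /\ forall P, P \in A -> s <= #|C :&: P|.

Definition tau_eq (n t : nat) (A : {set {set {set 'I_n}}}) (m : nat) : Prop :=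
  is_minimum (fun x => exists2 C, is_cover t A C & #|C| = x) m.

(* tau_t(A) >= m  (with tau = infinity if no t-cover exists). *)
Definition tau_ge (n t : nat) (A : {set {set {set 'I_n}}}) (m : nat) : Prop :=
  forall C, is_cover t A C -> m <= #|C|.

(* Main.v *)
Require Import Defs.
From mathcomp Require Import all_boot.
From Stdlib Require Import Classical.
Set Implicit Arguments.

Lemma card_sub (X : finType) (A B : {set X}) : #|A| <= #|A :&: B| -> A \subset B.
Proof.
move=> h; have: A :&: B == A by rewrite eqEcard subsetIl.
move/eqP => <-; exact: subsetIr.
Qed.

Lemma GG_mem n r (F : 'I_r -> {set {set {set 'I_n}}}) j (h : 'I_r -> {set {set 'I_n}}) :
  (forall l, l != j -> h l \in F l) -> \bigcap_(l < r | l != j) h l \in GG F j.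
Proof.
move=> H; rewrite inE; apply/existsP; exists [ffun l => h l]; apply/andP; split.
  by apply/forallP => l; apply/implyP => hl; rewrite ffunE; apply: H.
by apply/eqP; apply: eq_bigr => l _; rewrite ffunE.
Qed.

Lemma GG_inv n r (F : 'I_r -> {set {set {set 'I_n}}}) j G :
  G \in GG F j -> exists h : 'I_r -> {set {set 'I_n}},
    (forall l, l != j -> h l \in F l) /\ G = \bigcap_(l < r | l != j) h l.
Proof.
rewrite inE => /existsP [f /andP [/forallP H /eqP ->]].
by exists f; split => // l hl; have := H l; rewrite hl.
Qed.

Lemma cross_ker n r t (F : 'I_r -> {set {set {set 'I_n}}}) j (h : 'I_r -> {set {set 'I_n}}) P :
  cross_intersecting t F ->
  (forall l, l != j -> h l \in F l) -> P \in F j ->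
  t <= #|P :&: \bigcap_(l < r | l != j) h l|.
Proof.
move=> HC Hh HP.
have := HC (fun l => if l == j then P else h l).
rewrite (bigD1 j) //= eqxx.
have -> : \bigcap_(i < r | true && (i != j)) (if i == j then P else h i)
        = \bigcap_(l < r | l != j) h l.
  by apply: eq_bigr => l /negbTE ->.
apply => l; case: eqP => [->|/eqP] //; exact: Hh.
Qed.

Lemma Texists n r t (F : 'I_r -> {set {set {set 'I_n}}}) j :
  cross_intersecting t F -> s_eq F j t ->
  exists g : 'I_r -> {set {set 'I_n}}, (forall l, l != j -> g l \in F l) /\
    #|\bigcap_(l < r | l != j) g l| = t /\
    (forall P, P \in F j -> \bigcap_(l < r | l != j) g l \subset P).
Proof.
move=> HC [[G HG HGt] _]; have [g [Hg E]] := GG_inv HG.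
exists g; split => //; split; first by rewrite -E.
move=> P HP; apply: card_sub; rewrite -E HGt setIC E.
exact: (@cross_ker n r t F j g P HC Hg HP).
Qed.

Lemma ker_contra n r t (F : 'I_r -> {set {set {set 'I_n}}}) (D : {set {set 'I_n}}) :
  nontrivial t F -> t <= #|D| ->
  (forall l P, P \in F l -> D \subset P) -> False.
Proof.
move=> NT HD H.
have : D \subset \bigcap_(i < r) \bigcap_(P in F i) P.
  apply/bigcapsP => l _; apply/bigcapsP => P HP; exact: (H l P HP).
move/subset_leq_card => h.
by move: NT; rewrite /nontrivial ltnNge (leq_trans HD h).
Qed.

Definition upd n r (h : 'I_r -> {set {set 'I_n}}) (l : 'I_r) (P : {set {set 'I_n}}) :=
  fun m => if m == l then P else h m.

Lemma upd_at n r (h : 'I_r -> {set {set 'I_n}}) l P : upd h l P l = P.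
Proof. by rewrite /upd eqxx. Qed.

Lemma upd_ne n r (h : 'I_r -> {set {set 'I_n}}) l P m : m != l -> upd h l P m = h m.
Proof. by rewrite /upd => /negbTE ->. Qed.

Lemma upd_valid n r (F : 'I_r -> {set {set {set 'I_n}}}) j h l P :
  (forall m, m != j -> h m \in F m) -> P \in F l ->
  (forall m, m != j -> upd h l P m \in F m).
Proof.
move=> Hh HP m hm; rewrite /upd; case: eqP => [->|_] //; exact: Hh.
Qed.

Lemma part1 n r t (F : 'I_r -> {set {set {set 'I_n}}}) :
  (forall i, F i != set0) -> nontrivial t F -> cross_intersecting t F ->
  (forall i, s_eq F i t) ->
  forall j C, is_cover t (GG F j) C ->
     forall i1 i2, i1 != j -> i2 != j ->
       ~ is_cover t.+1 (F i1) C -> ~ is_cover t.+1 (F i2) C -> i1 = i2.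
Proof.
move=> Hne NT HC Hs j C [HpC HcC] i1 i2 h1 h2 N1 N2.
case: (eqVneq i1 i2) => // ne12; exfalso.
have [A HA HA'] : exists2 A, A \in F i1 & #|C :&: A| <= t.
  case: (boolP [forall P in F i1, t.+1 <= #|C :&: P|]) => [/forall_inP H|/forall_inPn [A HA HnA]].
  - by case: N1; split => // P /H.
  - by exists A => //; rewrite leqNgt.
have [B HB HB'] : exists2 B, B \in F i2 & #|C :&: B| <= t.
  case: (boolP [forall P in F i2, t.+1 <= #|C :&: P|]) => [/forall_inP H|/forall_inPn [B HB HnB]].
  - by case: N2; split => // P /H.
  - by exists B => //; rewrite leqNgt.
pose e l := odflt set0 [pick x in F l].
have He : forall l, l != j -> e l \in F l.
  move=> l _; rewrite /e; case: pickP => [x //|H0]; exfalso.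
  by move/set0Pn: (Hne l) => [x Hx]; have := H0 x; rewrite /= Hx.
have stepa : forall (h : 'I_r -> {set {set 'I_n}}) a X, (forall l, l != j -> h l \in F l) ->
   a != j -> h a = X -> #|C :&: X| <= t ->
   C :&: \bigcap_(l < r | l != j) h l = C :&: X.
  move=> h a X Hh ha E HX; apply/eqP; rewrite eqEcard; apply/andP; split.
    by apply: setIS; rewrite -E; apply: bigcap_inf.
  exact: (leq_trans HX (HcC _ (@GG_mem n r F j h Hh))).
pose h0 := upd (upd e i1 A) i2 B.
have Hh0 : forall l, l != j -> h0 l \in F l by apply: upd_valid => //; apply: upd_valid.
have E0a : C :&: \bigcap_(l < r | l != j) h0 l = C :&: A.
  by apply: (stepa _ i1) => //; rewrite /h0 upd_ne // upd_at.
have E0b : C :&: \bigcap_(l < r | l != j) h0 l = C :&: B.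
  by apply: (stepa _ i2) => //; rewrite /h0 upd_at.
have HD : t <= #|C :&: A| by rewrite -E0a; exact: HcC _ (@GG_mem n r F j h0 Hh0).
have stepc : forall l P, l != j -> P \in F l -> C :&: A \subset P.
  move=> l P hl HP; case: (eqVneq l i1) => [El|nl].
  - have Hh : forall m, m != j -> upd h0 l P m \in F m by apply: upd_valid.
    have E : C :&: \bigcap_(m < r | m != j) upd h0 l P m = C :&: B.
      apply: (stepa _ i2) => //; rewrite upd_ne; first by rewrite /h0 upd_at.
      by rewrite El eq_sym.
    rewrite -E0a E0b -E; apply: subset_trans (subsetIr _ _) _.
    by apply: subset_trans (bigcap_inf l hl) _; rewrite upd_at.
  - have Hh : forall m, m != j -> upd h0 l P m \in F m by apply: upd_valid.
    have E : C :&: \bigcap_(m < r | m != j) upd h0 l P m = C :&: A.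
      apply: (stepa _ i1) => //; rewrite upd_ne; last by rewrite eq_sym.
      by rewrite /h0 upd_ne // upd_at.
    rewrite -E; apply: subset_trans (subsetIr _ _) _.
    by apply: subset_trans (bigcap_inf l hl) _; rewrite upd_at.
have [g [Hg [_ Hsub]]] := Texists HC (Hs j).
apply: (ker_contra NT HD) => l P HP.
case: (eqVneq l j) => [El|nl]; last exact: stepc HP.
rewrite El in HP; apply: subset_trans (Hsub _ HP).
by apply/bigcapsP => m hm; apply: (stepc m) => //; exact: Hg.
Qed.
Unset Implicit Arguments.

Theorem mainTheorem15 (n r t : nat) (k : 'I_r -> nat)
  (F : 'I_r -> {set {set {set 'I_n}}}) :
  3 <= r ->
  (forall i j : 'I_r, i <= j -> k j <= k i) ->
  (forall i, k i < n) ->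
  (forall i, t.+2 <= k i) ->
  (forall i P, P \in F i -> in_Pi (k i) P) ->
  (forall i, F i != set0) ->
  nontrivial t F ->
  cross_intersecting t F ->
  (forall i, s_eq F i t) ->
  (forall j C, is_cover t (GG F j) C ->
     forall i1 i2, i1 != j -> i2 != j ->
       ~ is_cover t.+1 (F i1) C -> ~ is_cover t.+1 (F i2) C -> i1 = i2)
  /\ (forall i, tau_eq t (F i) t /\ tau_ge t (GG F i) t.+2).
Proof.
move=> r3 _ _ _ HPi Hne NT HC Hs.
split; first exact: part1.
move=> i.
have [g [Hg [Hcard Hsub]]] := Texists HC (Hs i).
set Ti := \bigcap_(l < r | l != i) g l in Hcard Hsub *.
split.
  split.
    exists Ti => //; split.
      have [l hl] : exists l : 'I_r, l != i.
        have : [set~ i] != set0.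
          by rewrite -card_gt0 cardsC1 card_ord -ltnS (ltn_predK r3) (leq_trans _ r3).
        by move/set0Pn => [l]; rewrite in_setC1; exists l.
      have sub : Ti \subset g l by apply: bigcap_inf.
      have [[n0 tr] _] := HPi l (g l) (Hg l hl).
      split; last exact: trivIsetS sub tr.
      by apply/negP => H0; have := subsetP sub _ H0; rewrite (negbTE n0).
    by move=> P HP; rewrite (setIidPl (Hsub P HP)) Hcard.
  move=> x [C [_ HC'] <-].
  have [P HP] := set0Pn _ (Hne i).
  apply: leq_trans (HC' P HP) _; exact: subset_leq_card (subsetIl _ _).
move=> C HCv; rewrite leqNgt; apply/negP => Hlt.
have HTiC : Ti \subset C.
  apply: card_sub; rewrite Hcard setIC; exact: HCv.2 _ (@GG_mem n r F i g Hg).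
have Hcov : forall l, is_cover t.+1 (F l) C -> forall P, P \in F l -> C \subset P.
  move=> l [_ Hl] P HP; apply: card_sub; exact: leq_trans (Hlt : #|C| <= t.+1) (Hl P HP).
apply: (ker_contra NT (D:=Ti)); first by rewrite Hcard.
move=> l P HP; case: (eqVneq l i) => [El|hli]; first by rewrite El in HP; exact: Hsub.
case: (classic (is_cover t.+1 (F l) C)) => Hl.
  exact: subset_trans HTiC (Hcov l Hl P HP).
have [gl [Hgl [_ Hsubl]]] := Texists HC (Hs l).
apply: subset_trans (Hsubl P HP).
apply/bigcapsP => m hml; case: (eqVneq m i) => [->|hmi].
  by apply: Hsub; apply: Hgl; rewrite eq_sym.
case: (classic (is_cover t.+1 (F m) C)) => Hm.
  exact: subset_trans HTiC (Hcov m Hm _ (Hgl m hml)).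
exfalso; move/eqP: hml; apply.
exact: (@part1 n r t F Hne NT HC Hs i C HCv m l hmi hli Hm Hl).
Qed.
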